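(* Let $\Phi(k)=24182784k^5-927166375k^4+274015368k^3+10740240k^2-318470912k-47232000$. Let $\alpha$ be any real root of $\Phi$ in the interval $(-0.55,-0.54)$ (such a root exists), let $s$ be a real number with $$s^2=\frac{36(4\alpha+5)}{1025\alpha(5\alpha-4)},$$ and set $c=\frac{32(4\alpha+5)}{205(5\alpha-4)}$, $f=-\frac{5(4\alpha+5)}{41}s$, $$C_\alpha=\begin{bmatrix}0&\frac12&s&c&0\\0&0&\frac12&f&-\frac54c\\0&0&0&\frac12&\alpha s\\0&0&0&0&\frac25\\0&0&0&0&0\end{bmatrix}.$$ Then $C_\alpha$ is a contraction, $Q_{C_\alpha}(x,y)\in\mathbb{C}[xy]$ and $P_{C_\alpha}(x,y)\notin\mathbb{C}[xy]$. Consequently $\mathcal{A}(C_\alpha)$ has the Circularity property while $C_\alpha$ does not.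
   Context: A contraction is a matrix with $\|C\|\le1$. $P_C(x,y)=\det(I-xC-yC^* )$, $Q_C(x,y)=\det(I-xC-yC^*-xy(I-C^*C))$; $\mathbb{C}[xy]$ is the set of polynomials in the product $xy$ alone. $H_X(\theta)=\frac12(e^{-i\theta}X+e^{i\theta}X^* )$; $X$ has the Circularity property if the spectrum of $H_X(\theta)$ is independent of $\theta$. For a contraction $C\in M_n$: $D_C=I-C^*C$, $d=\operatorname{rank}D_C$, $B_C$ is a $d\times n$ matrix of full row rank with $B_C^*B_C=D_C$, and $\mathcal{A}(C)=\begin{bmatrix}0&B_C\\0&C\end{bmatrix}$. *)

(* Defs.v *)
From HB Require Import structures.
From mathcomp Require Import all_boot all_order all_algebra.
From mathcomp Require Import complex.
From mathcomp Require Import reals trigo.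
Set Implicit Arguments. Unset Strict Implicit. Unset Printing Implicit Defensive.
Import Order.TTheory GRing.Theory Num.Theory.
Local Open Scope ring_scope.
Local Open Scope complex_scope.

Section Defs.
Variable R : realType.
Local Notation C := R[i].

Definition adjmx m n (X : 'M[C]_(m, n)) : 'M[C]_(n, m) := (map_mx conjc X)^T.

Definition sqnorm n (v : 'cV[C]_n) : C := \sum_i `|v i 0| ^+ 2.

Definition contraction n (X : 'M[C]_n) : Prop :=
  forall v : 'cV[C]_n, sqnorm (X *m v) <= sqnorm v.

Definition P_poly n (X : 'M[C]_n) (x y : C) : C :=
  \det (1%:M - x *: X - y *: adjmx X).

Definition Q_poly n (X : 'M[C]_n) (x y : C) : C :=
  \det (1%:M - x *: X - y *: adjmx X - (x * y) *: (1%:M - adjmx X *m X)).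

Definition in_Cxy (F : C -> C -> C) : Prop :=
  exists q : {poly C}, forall x y : C, F x y = q.[x * y].

Definition expi (t : R) : C := (cos t) +i* (sin t).

Definition Hmx n (X : 'M[C]_n) (t : R) : 'M[C]_n :=
  2^-1 *: (expi (- t) *: X + expi t *: adjmx X).

(* spectrum (eigenvalues counted with multiplicity, i.e. the characteristic
   polynomial) of H_X(theta) independent of theta *)
Definition Circularity n (X : 'M[C]_n) : Prop :=
  forall t1 t2 : R, char_poly (Hmx X t1) = char_poly (Hmx X t2).

Definition DC n (X : 'M[C]_n) : 'M[C]_n := 1%:M - adjmx X *m X.

Definition Amx d n (B : 'M[C]_(d, n)) (X : 'M[C]_n) : 'M[C]_(d + n) :=
  block_mx 0 B 0 X.

(* n3 a b c = the decimal number "a b c" in groups of three digits,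
   i.e. a * 10^6 + b * 10^3 + c (avoids huge unary nat literals) *)
Definition n3 (a b c : nat) : R := (a%:R * 1000 + b%:R) * 1000 + c%:R.

Definition Phi (k : R) : R :=
  n3 24 182 784 * k ^+ 5 - n3 927 166 375 * k ^+ 4 + n3 274 15 368 * k ^+ 3
  + n3 10 740 240 * k ^+ 2 - n3 318 470 912 * k - n3 47 232 0.

Definition cc (a : R) : R := 32 * (4 * a + 5) / (205 * (5 * a - 4)).
Definition ff (a s : R) : R := - (5 * (4 * a + 5) / 41) * s.

Definition Cmx_real (a s : R) : 'M[R]_5 :=
  \matrix_(i < 5, j < 5)
    match nat_of_ord i, nat_of_ord j with
    | 0, 1 => 2^-1 | 0, 2 => s | 0, 3 => cc a
    | 1, 2 => 2^-1 | 1, 3 => ff a s | 1, 4 => - (5 / 4) * cc a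
    | 2, 3 => 2^-1 | 2, 4 => a * s
    | 3, 4 => 2 / 5
    | _, _ => 0
    end.

Definition Calpha (a s : R) : 'M[C]_5 := map_mx (fun r => r%:C) (Cmx_real a s).

End Defs.

(* Main.v *)
Require Import Defs.
From HB Require Import structures.
From mathcomp Require Import all_boot all_order all_algebra.
From mathcomp Require Import complex.
From mathcomp Require Import reals trigo.
From mathcomp Require Import ring lra.
Import Order.TTheory GRing.Theory Num.Theory.
Local Open Scope ring_scope.
Set Implicit Arguments. Unset Strict Implicit. Unset Printing Implicit Defensive.

Section G.
Variable F : numFieldType.

Definition mxn n (e : nat -> nat -> F) : 'M[F]_n := \matrix_(i < n, j < n) e i j.

Fixpoint sumn_ (m : nat) (g : nat -> F) : F :=
  match m with 0 => 0 | m'.+1 => sumn_ m' g + g m' end.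

Fixpoint detn (n : nat) (e : nat -> nat -> F) : F :=
  match n with
  | 0 => 1
  | n'.+1 => sumn_ n (fun j => (if odd j then -1 else 1) * e 0%N j
                 * detn n' (fun i k => e i.+1 (bump j k)))
  end.

Lemma sumn_E m g : sumn_ m g = \sum_(j < m) g j.
Proof.
elim: m => [|m IH]; first by rewrite big_ord0.
by rewrite big_ord_recr /= IH.
Qed.

Lemma detnS n e : detn n.+1 e = sumn_ n.+1 (fun j => (if odd j then -1 else 1) * e 0%N j
                 * detn n (fun i k => e i.+1 (bump j k))).
Proof. by []. Qed.

Lemma det_mxn n e : \det (mxn n e) = detn n e.
Proof.
elim: n e => [|n IH] e; first by rewrite det_mx00.
rewrite (expand_det_row _ ord0) detnS sumn_E; apply: eq_bigr => j _.
rewrite /cofactor !mxE add0n -signr_odd mulrA [e _ _ * _]mulrC -IH.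
rewrite (_ : (-1) ^+ odd j = if odd j then -1 else 1); last by case: odd.
congr (_ * determinant _).
by apply/matrixP => i k; rewrite !mxE.
Qed.

Definition ce (a s c : F) (i j : nat) : F :=
  match i, j with
  | 0, 1 => 2^-1 | 0, 2 => s | 0, 3 => c
  | 1, 2 => 2^-1 | 1, 3 => - (5 * (4 * a + 5) / 41) * s | 1, 4 => - (5 / 4) * c
  | 2, 3 => 2^-1 | 2, 4 => a * s
  | 3, 4 => 2 / 5
  | _, _ => 0
  end.

Lemma Qmx_mxn n (e : nat -> nat -> F) x y :
  1%:M - x *: mxn n e - y *: (mxn n e)^T - (x * y) *: (1%:M - (mxn n e)^T *m mxn n e)
  = mxn n (fun i j => (i == j)%:R - x * e i j - y * e j i
         - x * y * ((i == j)%:R - sumn_ n (fun k => e k i * e k j))).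
Proof.
apply/matrixP => i j; rewrite !mxE sumn_E; congr (_ - _ - _ - _ * (_ - _)).
by apply: eq_bigr => k _; rewrite !mxE.
Qed.
Definition Q22 (a s c : F) : F := ((909/100) + (-(41/16))*c^+2 + (-((2*1000+306)/(1*1000+681)))*s^+2 + (-((1*1000+0)/(1*1000+681)))*a*s^+2 + (-((2*1000+81)/(1*1000+681)))*a^+2*s^+2).
Definition Q33 (a s c : F) : F := ((-((1*1000+487)/200)) + ((12*1000+219)/(1*1000+600))*c^+2 + ((6*1000+754)/(1*1000+681))*s^+2 + ((3*1000+410)/(1*1000+681))*a*s^+2 + (9/20)*a*s^+2*c + ((23*1000+947)/(6*1000+724))*a^+2*s^+2 + (-1)*a^+2*(s^+2)^+2).
Definition Q44 (a s c : F) : F := (((4*1000+347)/(1*1000+600)) + (-((10*1000+313)/(1*1000+600)))*c^+2 + (25/16)*c^+4 + (-((290*1000+939)/(84*1000+50)))*s^+2 + (25/41)*s^+2*c + (25/16)*s^+2*c^+2 + (625/(1*1000+681))*(s^+2)^+2 + (-((3*1000+40)/(1*1000+681)))*a*s^+2 + (-(297/410))*a*s^+2*c + ((1*1000+0)/(1*1000+681))*a*(s^+2)^+2 + (-((80*1000+341)/(26*1000+896)))*a^+2*s^+2 + (-(25/41))*a^+2*s^+2*c + 1*a^+2*s^+2*c^+2 + (107/41)*a^+2*(s^+2)^+2 + ((1*1000+0)/(1*1000+681))*a^+3*(s^+2)^+2 + (400/(1*1000+681))*a^+4*(s^+2)^+2).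
Definition Q55 (a s c : F) : F := ((-(567/(1*1000+600))) + ((9*1000+657)/(6*1000+400))*c^+2 + (-(25/16))*c^+4 + ((72*1000+639)/(84*1000+50))*s^+2 + (-(21/41))*s^+2*c + (-(75/64))*s^+2*c^+2 + (-(525/(1*1000+681)))*(s^+2)^+2 + (630/(1*1000+681))*a*s^+2 + (531/(3*1000+280))*a*s^+2*c + (-(5/8))*a*s^+2*c^+2 + (-(840/(1*1000+681)))*a*(s^+2)^+2 + (-(125/164))*a*(s^+2)^+2*c + ((19*1000+161)/(26*1000+896))*a^+2*s^+2 + (75/164)*a^+2*s^+2*c + (-(3/4))*a^+2*s^+2*c^+2 + (-((9*1000+943)/(6*1000+724)))*a^+2*(s^+2)^+2 + (625/(1*1000+681))*a^+2*(s^+2)^+3 + (-(750/(1*1000+681)))*a^+3*(s^+2)^+2 + (20/41)*a^+3*(s^+2)^+2*c + ((1*1000+0)/(1*1000+681))*a^+3*(s^+2)^+3 + (-(300/(1*1000+681)))*a^+4*(s^+2)^+2 + (400/(1*1000+681))*a^+4*(s^+2)^+3).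
Definition E23 (a s c : F) : F := s * ((-(4/41)) + (-(1/2))*c + (-(16/205))*a + (5/8)*a*c).
Definition E34 (a s c : F) : F := s * ((8/41) + ((1*1000+43)/(1*1000+25))*c + (32/205)*a + (-((1*1000+595)/(1*1000+312)))*a*c + (-(16/205))*a*s^+2 + (-(25/164))*a^+2*s^+2).
Definition E35 (a s c : F) : F := ((9/800)*c + (-(1/20))*a*s^+2).
Definition E45 (a s c : F) : F := s * ((-(63/(1*1000+25))) + (-((3*1000+219)/(8*1000+200)))*c + (1/4)*c^+2 + (25/32)*c^+3 + (25/82)*s^+2*c + (-(117/(3*1000+280)))*a + ((3*1000+219)/(6*1000+560))*a*c + (5/16)*a*c^+2 + (-(5/8))*a*c^+3 + (1/5)*a*s^+2 + (10/41)*a*s^+2*c + (-(125/164))*a*s^+2*c^+2 + (1/4)*a^+2*s^+2 + (-(25/82))*a^+2*s^+2*c + (-(25/41))*a^+2*s^+2*c^+2 + (-(10/41))*a^+3*s^+2*c).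
Definition P11 (a s c : F) : F := ((-(91/100)) + (-(41/16))*c^+2 + (-((2*1000+306)/(1*1000+681)))*s^+2 + (-((1*1000+0)/(1*1000+681)))*a*s^+2 + (-((2*1000+81)/(1*1000+681)))*a^+2*s^+2).
Definition P22 (a s c : F) : F := ((57/400) + (73/64)*c^+2 + (25/16)*c^+4 + (953/(2*1000+50))*s^+2 + (25/41)*s^+2*c + (25/16)*s^+2*c^+2 + (625/(1*1000+681))*(s^+2)^+2 + (20/41)*a*s^+2 + (36/205)*a*s^+2*c + ((1*1000+0)/(1*1000+681))*a*(s^+2)^+2 + (73/164)*a^+2*s^+2 + (-(25/41))*a^+2*s^+2*c + 1*a^+2*s^+2*c^+2 + (25/41)*a^+2*(s^+2)^+2 + ((1*1000+0)/(1*1000+681))*a^+3*(s^+2)^+2 + (400/(1*1000+681))*a^+4*(s^+2)^+2).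
Definition P23 (a s c : F) : F := s * ((1/25) + (1/8)*c + (1/4)*c^+2 + (25/32)*c^+3 + (25/82)*s^+2*c + (1/20)*a + (-(1/10))*a*c + (5/16)*a*c^+2 + (-(5/8))*a*c^+3 + (5/41)*a*s^+2 + (10/41)*a*s^+2*c + (-(125/164))*a*s^+2*c^+2 + (4/41)*a^+2*s^+2 + (-(25/82))*a^+2*s^+2*c + (-(25/41))*a^+2*s^+2*c^+2 + (-(10/41))*a^+3*s^+2*c).

Definition PhiF (a : F) : F :=
  ((24*1000+182)*1000+784) * a ^+ 5 - ((927*1000+166)*1000+375) * a ^+ 4
  + ((274*1000+15)*1000+368) * a ^+ 3 + ((10*1000+740)*1000+240) * a ^+ 2
  - ((318*1000+470)*1000+912) * a - ((47*1000+232)*1000+0).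

Section Rel.
Variables a s c : F.
Hypothesis ha : a != 0.
Hypothesis h5 : 5 * a - 4 != 0.
Hypothesis hc : c = 32 * (4 * a + 5) / (205 * (5 * a - 4)).
Hypothesis hs : s ^+ 2 = 36 * (4 * a + 5) / (1025 * a * (5 * a - 4)).
Hypothesis hphi : PhiF a = 0.

Lemma E23_0 : E23 a s c = 0.
Proof using ha h5 hc hs hphi. rewrite /E23 hc. by field; rewrite ?[a * 5]mulrC ?h5 ?ha.
Qed.
Lemma E35_0 : E35 a s c = 0.
Proof using ha h5 hc hs hphi. rewrite /E35 hs hc. by field; rewrite ?[a * 5]mulrC ?h5 ?ha.
Qed.
Lemma E34_0 : E34 a s c = 0.
Proof using ha h5 hc hs hphi. rewrite /E34 hs hc. by field; rewrite ?[a * 5]mulrC ?h5 ?ha.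
Qed.
Lemma E45_0 : E45 a s c = 0.
Proof using ha h5 hc hs hphi.
rewrite /E45 hs hc.
apply: (@eq_trans _ _ (s * (- PhiF a / ((((28*1000+257)*1000+610)*1000+0) * (a * (a - 4/5)^+2))))).
  by rewrite /PhiF; field; rewrite ?[a * 5]mulrC ?h5 ?ha.
by rewrite hphi oppr0 mul0r mulr0.
Qed.
Lemma P23_eq : P23 a s c =
  s * (a * (64/(25*1000+625) - 7/(5*1000+125)*a - 17/(2*1000+50)*a^+2 + 5/656*a^+3))
  / (a * (a - 4/5)^+2).
Proof using ha h5 hc hs hphi.
apply: (@eq_trans _ _ (s * (- PhiF a / (((28*1000+257)*1000+610)*1000+0) +
  a * (64/(25*1000+625) - 7/(5*1000+125)*a - 17/(2*1000+50)*a^+2 + 5/656*a^+3))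
  / (a * (a - 4/5)^+2))).
  by rewrite /P23 hs hc /PhiF; field; rewrite ?[a * 5]mulrC ?h5 ?ha.
by rewrite hphi oppr0 mul0r add0r.
Qed.
End Rel.

Definition Qent (a s c x y : F) i j := (i == j)%:R - x * ce a s c i j - y * ce a s c j i
         - x * y * ((i == j)%:R - sumn_ 5 (fun k => ce a s c k i * ce a s c k j)).
Definition Pent (a s c x y : F) i j := (i == j)%:R - x * ce a s c i j - y * ce a s c j i.

Lemma Pmx_mxn n (e : nat -> nat -> F) x y :
  1%:M - x *: mxn n e - y *: (mxn n e)^T
  = mxn n (fun i j => (i == j)%:R - x * e i j - y * e j i).
Proof. by apply/matrixP => i j; rewrite !mxE. Qed.

Lemma detQ_group a s c x y : detn 5 (Qent a s c x y) =
  1 + x * y * (-5) + (x * y)^+2 * Q22 a s c + (x^+2 * y^+3 + x^+3 * y^+2) * E23 a s c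
  + (x * y)^+3 * Q33 a s c + (x^+3 * y^+4 + x^+4 * y^+3) * E34 a s c
  + (x^+3 * y^+5 + x^+5 * y^+3) * E35 a s c + (x * y)^+4 * Q44 a s c
  + (x^+4 * y^+5 + x^+5 * y^+4) * E45 a s c + (x * y)^+5 * Q55 a s c.
Proof.
rewrite /Qent /= /Q22 /Q33 /Q44 /Q55 /E23 /E34 /E35 /E45.
Time by field.
Qed.

Lemma detP_group a s c x y : detn 5 (Pent a s c x y) =
  1 + x * y * P11 a s c + (x * y^+2 + x^+2 * y) * E23 a s c + (x * y)^+2 * P22 a s c
  + (x^+2 * y^+3 + x^+3 * y^+2) * P23 a s c.
Proof.
rewrite /Pent /= /P11 /P22 /P23 /E23.
Time by field.
Qed.
Lemma detP_pair a s c x y : x * y = 1 -> detn 5 (Pent a s c x y) =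
  1 + P11 a s c + P22 a s c + (x + y) * (E23 a s c + P23 a s c).
Proof.
move=> hxy; rewrite detP_group.
have e2 : x * y ^+ 2 = y by rewrite expr2 mulrA hxy mul1r.
have e3 : x ^+ 2 * y = x by rewrite expr2 -mulrA hxy mulr1.
have e4 : x ^+ 2 * y ^+ 3 = (x * y) ^+ 2 * y by ring.
have e5 : x ^+ 3 * y ^+ 2 = (x * y) ^+ 2 * x by ring.
rewrite hxy expr1n mul1r in e4 e5.
rewrite e2 e3 e4 e5 hxy expr1n mul1r mul1r.
move: (P11 a s c) (P22 a s c) (E23 a s c) (P23 a s c) => p1 p2 p3 p4; ring.
Qed.
End G.

Local Opaque Q22 Q33 Q44 Q55 E23 E34 E35 E45 P11 P22 P23 detn.

Section M.
Variable R : realType.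
Local Notation C := R[i].


Lemma Calpha_mxn (a s : R) :
  Calpha a s = mxn 5 (ce (a%:C)%C (s%:C)%C ((cc a)%:C)%C).
Proof.
apply/matrixP => i j; rewrite !mxE.
case: i => [[|[|[|[|[|i]]]]] Hi] //; case: j => [[|[|[|[|[|j]]]]] Hj] //=.
all: by rewrite /ff; field.
Qed.

Local Open Scope complex_scope.
Lemma adjmx_real m n (M : 'M[R]_(m,n)) :
  adjmx (map_mx (fun r => r%:C) M) = (map_mx (fun r => r%:C) M)^T.
Proof. by rewrite /adjmx; congr (_^T); apply/matrixP => i j; rewrite !mxE conjc_real. Qed.

Lemma adjmx_Calpha (a s : R) : adjmx (Calpha a s) = (Calpha a s)^T.
Proof. exact: adjmx_real. Qed.

Lemma QCalpha (a s : R) (x y : C) :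
  Q_poly (Calpha a s) x y = detn 5 (Qent a%:C s%:C (cc a)%:C x y).
Proof. by rewrite /Q_poly adjmx_Calpha Calpha_mxn Qmx_mxn det_mxn; congr detn. Qed.

Lemma PCalpha (a s : R) (x y : C) :
  P_poly (Calpha a s) x y = detn 5 (Pent a%:C s%:C (cc a)%:C x y).
Proof. by rewrite /P_poly adjmx_Calpha Calpha_mxn Pmx_mxn det_mxn; congr detn. Qed.

Lemma hcC (a : R) : (cc a)%:C = 32 * (4 * a%:C + 5) / (205 * (5 * a%:C - 4)).
Proof. by rewrite /cc rmorphM fmorphV; congr (_ * _^-1); ring. Qed.

Lemma hsC (a s : R) : s ^+ 2 = 36 * (4 * a + 5) / (1025 * a * (5 * a - 4)) ->
  s%:C ^+ 2 = 36 * (4 * a%:C + 5) / (1025 * a%:C * (5 * a%:C - 4)).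
Proof. by move=> hs; rewrite -rmorphXn hs rmorphM fmorphV; congr (_ * _^-1); ring. Qed.

Lemma PhiE (a : R) : Phi a = PhiF a.
Proof. by []. Qed.

Lemma phiC (a : R) : Phi a = 0 -> PhiF a%:C = 0.
Proof.
move=> h; have -> : PhiF a%:C = (PhiF a)%:C.
  by rewrite /PhiF; ring.
by rewrite -PhiE h rmorph0.
Qed.

Lemma neqC (r : R) : r != 0 -> r%:C != 0.
Proof. by rewrite fmorph_eq0. Qed.

Lemma h5C (a : R) : 5 * a - 4 != 0 -> 5 * a%:C - 4 != 0.
Proof.
move=> h; rewrite (_ : _ - _ = (5 * a - 4)%:C) ?neqC //.
by ring.
Qed.

Definition qQ (a s c : C) : {poly C} :=
  1 - 5%:P * 'X + (Q22 a s c)%:P * 'X^2 + (Q33 a s c)%:P * 'X^3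
  + (Q44 a s c)%:P * 'X^4 + (Q55 a s c)%:P * 'X^5.

Lemma Q_in (a s : R) : a != 0 -> 5 * a - 4 != 0 -> Phi a = 0 ->
  s ^+ 2 = 36 * (4 * a + 5) / (1025 * a * (5 * a - 4)) ->
  forall x y, Q_poly (Calpha a s) x y = (qQ a%:C s%:C (cc a)%:C).[x * y].
Proof.
move=> ha h5 hp hs x y.
have ha' := neqC ha; have h5' := h5C h5; have hc' := hcC a; have hs' := hsC hs.
have hp' := phiC hp.
Time rewrite QCalpha. Time rewrite detQ_group. Time rewrite (E23_0 ha' h5' hc' hs' hp') (E34_0 ha' h5' hc' hs' hp') (E35_0 ha' h5' hc' hs' hp') (E45_0 ha' h5' hc' hs' hp'). Time rewrite /qQ !(hornerD, hornerN, hornerCM, hornerXn, hornerX, hornerC, hornerN).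
move: (Q22 _ _ _) (Q33 _ _ _) (Q44 _ _ _) (Q55 _ _ _) => q2 q3 q4 q5.
Time ring.
Qed.

Lemma cub_neg (a : R) : - (55 / 100) < a < - (54 / 100) ->
  1024 - 560 * a - 3400 * a ^+ 2 + 3125 * a ^+ 3 < 0.
Proof.
case/andP => h1 h2.
have h3 : a ^+ 2 >= 2916 / 10000 by nra.
have h4 : a ^+ 3 <= - (157 / 1000) by nra.
lra.
Qed.

Lemma s_neq0 (a s : R) : - (55 / 100) < a < - (54 / 100) ->
  s ^+ 2 = 36 * (4 * a + 5) / (1025 * a * (5 * a - 4)) -> s != 0.
Proof.
case/andP => h1 h2 hs; apply/negP => /eqP s0; move: hs; rewrite s0 expr0n /=.
have hp : 0 < 36 * (4 * a + 5) / (1025 * a * (5 * a - 4)).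
  by apply: divr_gt0; nra.
by move=> h; rewrite -h ltxx in hp.
Qed.

Lemma sqr_iN : (- 'i) * 'i = 1 :> C.
Proof. by rewrite mulNr -expr2 sqr_i opprK. Qed.

Lemma P_ne (a s : R) : - (55 / 100) < a < - (54 / 100) -> Phi a = 0 ->
  s ^+ 2 = 36 * (4 * a + 5) / (1025 * a * (5 * a - 4)) ->
  P_poly (Calpha a s) 1 1 != P_poly (Calpha a s) (- 'i) 'i.
Proof.
move=> hab hp hs; have /andP [h1 h2] := hab.
have ha : a != 0 by apply: ltr0_neq0; lra.
have h5 : 5 * a - 4 != 0 by apply: ltr0_neq0; lra.
have ha' := neqC ha; have h5' := h5C h5; have hc' := hcC a; have hs' := hsC hs.
have hp' := phiC hp.
rewrite !PCalpha (detP_pair _ _ _ (mul1r 1)) (detP_pair _ _ _ sqr_iN).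
Time rewrite (E23_0 ha' h5' hc' hs' hp'). Time rewrite add0r. Time rewrite (addNr ('i : C)) mul0r. Time rewrite addr0. Time rewrite (P23_eq ha' h5' hc' hs' hp').
rewrite -[X in _ != X]addr0 (inj_eq (addrI _)).
have hs0 : s%:C != 0 by apply: neqC; exact: s_neq0 hs.
have ha4 : a%:C - 4/5 != 0.
  rewrite (_ : _ - _ = (a - 4/5)%:C); last by field.
  by apply: neqC; apply: ltr0_neq0; lra.
have hcub : 64/(25*1000+625) - 7/(5*1000+125)*a%:C - 17/(2*1000+50)*a%:C^+2 + 5/656*a%:C^+3 != 0.
  rewrite (_ : _ + _ = ((1024 - 560 * a - 3400 * a ^+ 2 + 3125 * a ^+ 3) / (410 * 1000))%:C); last by field.
  apply: neqC; apply: ltr0_neq0; rewrite ltr_pdivrMr ?mul0r; first exact: cub_neg.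
  lra.
have h2c : (1 + 1 : C) != 0 by rewrite -mulr2n mulrn_eq0 oner_eq0.
exact: (mulf_neq0 h2c (mulf_neq0 (mulf_neq0 hs0 (mulf_neq0 ha' hcub))
  (invr_neq0 (mulf_neq0 ha' (expf_neq0 2 ha4))))).
Qed.

Lemma expiNK (t : R) : expi (- t) * expi t = 1.
Proof.
rewrite /expi cosN sinN; apply/eqP; rewrite eq_complex /=; apply/andP; split; apply/eqP.
  by rewrite -(cos2Dsin2 t); ring.
by ring.
Qed.

Lemma expi0 : expi 0 = 1 :> C.
Proof. by rewrite /expi cos0 sin0. Qed.

Lemma expi_pih : expi (pi / 2) = 'i :> C.
Proof. by rewrite /expi cos_pihalf sin_pihalf. Qed.

Lemma expi_Npih : expi (- (pi / 2)) = - 'i :> C.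
Proof. by rewrite /expi cosN sinN cos_pihalf sin_pihalf; apply/eqP; rewrite eq_complex /= oppr0 !eqxx. Qed.

Local Close Scope complex_scope.
Lemma Phi_lo : Phi (- (55 / 100) : R) < 0.
Proof. rewrite /Phi /n3. Time lra. Qed.
Lemma Phi_hi : 0 < Phi (- (54 / 100) : R).
Proof. rewrite /Phi /n3. Time lra. Qed.

Lemma exists_root : exists a : R, Phi a = 0 /\ - (55 / 100) < a < - (54 / 100).
Proof.
pose p : {poly R} := (n3 R 24 182 784)%:P * 'X^5 - (n3 R 927 166 375)%:P * 'X^4
  + (n3 R 274 15 368)%:P * 'X^3 + (n3 R 10 740 240)%:P * 'X^2
  - (n3 R 318 470 912)%:P * 'X - (n3 R 47 232 0)%:P.
have hp x : p.[x] = Phi x.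
  by rewrite /p !(hornerD, hornerN, hornerCM, hornerXn, hornerX, hornerC).
have hl := Phi_lo; have hh := Phi_hi.
have hab : - (55 / 100) <= - (54 / 100) :> R by lra.
have hpv : p.[- (55 / 100)] <= 0 <= p.[- (54 / 100)].
  by rewrite !hp; apply/andP; split; apply/ltW.
have [x /andP [h1 h2] hx] := poly_ivt hab hpv.
have hx' : Phi x = 0 by rewrite -hp; apply/eqP.
exists x; split => //; apply/andP; split; rewrite lt_neqAle ?h1 ?h2 andbT.
  by apply/eqP => e; rewrite e hx' in hl; rewrite ltxx in hl.
by apply/eqP => e; rewrite -e hx' in hh; rewrite ltxx in hh.
Qed.
Lemma cs3 (p1 p2 p3 u1 u2 u3 : R) :
  (p1 * u1 + p2 * u2 + p3 * u3) ^+ 2 <= (p1^+2 + p2^+2 + p3^+2) * (u1^+2 + u2^+2 + u3^+2).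
Proof.
rewrite -subr_ge0 (_ : _ - _ = (p1 * u2 - p2 * u1)^+2 + (p1 * u3 - p3 * u1)^+2 + (p2 * u3 - p3 * u2)^+2); last by ring.
by rewrite !addr_ge0 // sqr_ge0.
Qed.

Lemma cs2 (p1 p2 u1 u2 : R) :
  (p1 * u1 + p2 * u2) ^+ 2 <= (p1^+2 + p2^+2) * (u1^+2 + u2^+2).
Proof.
rewrite -subr_ge0 (_ : _ - _ = (p1 * u2 - p2 * u1)^+2); last by ring.
by rewrite sqr_ge0.
Qed.

Lemma rowbound_nat (a s : R) (g : nat -> R) : - (55 / 100) < a < - (54 / 100) ->
  s ^+ 2 = 36 * (4 * a + 5) / (1025 * a * (5 * a - 4)) ->
  sumn_ 5 (fun i => (sumn_ 5 (fun k => ce a s (cc a) i k * g k)) ^+ 2)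
  <= sumn_ 5 (fun i => g i ^+ 2).
Proof.
move=> /andP [h1 h2] hs.
have h5 : 5 * a - 4 != 0 by apply: ltr0_neq0; lra.
have ha : a != 0 by apply: ltr0_neq0; lra.
have hcd : cc a * (205 * (5 * a - 4)) = 32 * (4 * a + 5).
  by rewrite /cc; field; rewrite ?[a * 5]mulrC ?h5.
have hsd : s ^+ 2 * (1025 * a * (5 * a - 4)) = 36 * (4 * a + 5).
  by rewrite hs; field; rewrite ?[a * 5]mulrC ?h5 ?ha.
rewrite /=.
move: (cc a) hcd => c hcd.
have hc1 : c <= 0 by nra.
have hc2 : - (7 / 100) <= c by nra.
have hcc : c ^+ 2 <= 5 / 1000 by nra.
have hss : s ^+ 2 <= 3 / 100 by nra.
have hk : (5 * (4 * a + 5) / 41) ^+ 2 <= 12 / 100 by nra.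
have ha2 : a ^+ 2 <= 31 / 100 by nra.
have hks : (5 * (4 * a + 5) / 41) ^+ 2 * s ^+ 2 <= 12 / 100 * (3 / 100).
  by apply: ler_pM => //; apply: sqr_ge0.
have has : a ^+ 2 * s ^+ 2 <= 31 / 100 * (3 / 100).
  by apply: ler_pM => //; apply: sqr_ge0.
set S := _ + g 4%N ^+ 2.
have hS : 0 <= S by rewrite /S; nra.
have r0 := cs3 (2^-1) s c (g 1%N) (g 2%N) (g 3%N).
have r1 := cs3 (2^-1) (- (5 * (4 * a + 5) / 41) * s) (- (5 / 4) * c) (g 2%N) (g 3%N) (g 4%N).
have r2 := cs2 (2^-1) (a * s) (g 3%N) (g 4%N).
set W0 := _ + _ + c ^+ 2 in r0.
set W1 := _ + _ + (- (5 / 4) * c) ^+ 2 in r1.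
set W2 := _ + (a * s) ^+ 2 in r2.
have w0 : W0 * (g 1%N ^+ 2 + g 2%N ^+ 2 + g 3%N ^+ 2) <= W0 * S.
  by apply: ler_wpM2l; rewrite /W0 /S; nra.
have w1 : W1 * (g 2%N ^+ 2 + g 3%N ^+ 2 + g 4%N ^+ 2) <= W1 * S.
  by apply: ler_wpM2l; rewrite /W1 /S; nra.
have w2 : W2 * (g 3%N ^+ 2 + g 4%N ^+ 2) <= W2 * S.
  by apply: ler_wpM2l; rewrite /W2 /S; nra.
have w3 : (2 / 5 * g 4%N) ^+ 2 <= 4 / 25 * S by rewrite /S; nra.
have wsum : (W0 + W1 + W2 + 4 / 25) * S <= S.
  rewrite -[X in _ <= X]mul1r; apply: ler_wpM2r => //.
  rewrite /W0 /W1 /W2. 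
  have e1 : (- (5 * (4 * a + 5) / 41) * s) ^+ 2 = (5 * (4 * a + 5) / 41) ^+ 2 * s ^+ 2 by ring.
  have e2 : (a * s) ^+ 2 = a ^+ 2 * s ^+ 2 by ring.
  rewrite e1 e2; lra.
rewrite !mul0r !add0r expr0n /= addr0.
clearbody W0 W1 W2 S.
lra.
Qed.

Lemma Cmx_real_mxn (a s : R) : Cmx_real a s = mxn 5 (ce a s (cc a)).
Proof.
apply/matrixP => i j; rewrite !mxE.
by case: i => [[|[|[|[|[|i]]]]] Hi] //; case: j => [[|[|[|[|[|j]]]]] Hj].
Qed.

Lemma rowbound (a s : R) (u : 'I_5 -> R) : - (55 / 100) < a < - (54 / 100) ->
  s ^+ 2 = 36 * (4 * a + 5) / (1025 * a * (5 * a - 4)) ->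
  \sum_(i < 5) (\sum_(k < 5) Cmx_real a s i k * u k) ^+ 2 <= \sum_(i < 5) u i ^+ 2.
Proof.
move=> hab hs.
pose g k := u (inord k).
have H := rowbound_nat g hab hs.
rewrite (sumn_E 5 (fun i => (sumn_ 5 (fun k => ce a s (cc a) i k * g k)) ^+ 2)) in H.
rewrite (sumn_E 5 (fun i => g i ^+ 2)) in H.
have eu (k : 'I_5) : g k = u k by rewrite /g inord_val.
have e2 : \sum_(i < 5) u i ^+ 2 = \sum_(i < 5) g i ^+ 2.
  by apply: eq_bigr => i _; rewrite eu.
have e1 : \sum_(i < 5) (\sum_(k < 5) Cmx_real a s i k * u k) ^+ 2 =
   \sum_(i < 5) (sumn_ 5 (fun k => ce a s (cc a) i k * g k)) ^+ 2.
  apply: eq_bigr => i _; rewrite sumn_E; congr (_ ^+ 2); apply: eq_bigr => k _.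
  by rewrite Cmx_real_mxn mxE eu.
by rewrite e1 e2.
Qed.

Local Open Scope complex_scope.
Lemma entry (M : 'M[R]_5) (v : 'cV[R[i]]_5) i :
  (map_mx (fun r => r%:C) M *m v) i 0 =
  (\sum_k M i k * complex.Re (v k 0))%:C + 'i * (\sum_k M i k * complex.Im (v k 0))%:C.
Proof.
rewrite !mxE !rmorph_sum mulr_sumr -big_split; apply: eq_bigr => k _; rewrite mxE.
case: (v k 0) => x y /=; apply/eqP; rewrite eq_complex /=; apply/andP; split; apply/eqP; ring.
Qed.

Lemma norm2 (p q : R) : `|p%:C + 'i * q%:C| ^+ 2 = (p ^+ 2 + q ^+ 2)%:C.
Proof. by rewrite -add_Re2_Im2 /=; congr (_%:C); ring. Qed.

Lemma contr (a s : R) : - (55 / 100) < a < - (54 / 100) ->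
  s ^+ 2 = 36 * (4 * a + 5) / (1025 * a * (5 * a - 4)) ->
  contraction (Calpha a s).
Proof.
move=> hab hs v; rewrite /sqnorm /Calpha.
rewrite (eq_bigr (fun i => ((\sum_k Cmx_real a s i k * complex.Re (v k 0)) ^+ 2 +
   (\sum_k Cmx_real a s i k * complex.Im (v k 0)) ^+ 2)%:C)); last by move=> i _; rewrite entry norm2.
rewrite [X in _ <= X](eq_bigr (fun i => ((complex.Re (v i 0)) ^+ 2 + (complex.Im (v i 0)) ^+ 2)%:C));
  last by move=> i _; rewrite add_Re2_Im2.
rewrite -!rmorph_sum lecR !big_split /=.
by apply: lerD; apply: rowbound.
Qed.

Local Open Scope complex_scope.
Lemma horner_char n (M : 'M[C]_n) z : (char_poly M).[z] = \det (z%:M - M).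
Proof.
rewrite /char_poly -horner_evalE -det_map_mx; congr determinant.
apply/matrixP => i j; rewrite !mxE /horner_eval.
rewrite rmorphB rmorphMn; congr (_ *+ _ - _); [exact: hornerX | exact: hornerC].
Qed.

Lemma det_Hmx (X : 'M[C]_5) t z : z != 0 ->
  \det (z%:M - Hmx X t) = z ^+ 5 * P_poly X (expi (- t) / (2 * z)) (expi t / (2 * z)).
Proof.
move=> hz; rewrite /P_poly -detZ; congr determinant.
apply/matrixP => i j; rewrite !mxE.
case: (i == j); rewrite /= ?mulr1n ?mulr0n; by field.
Qed.

Lemma poly_eq_nz (p q : {poly C}) : (forall z, z != 0 -> p.[z] = q.[z]) -> p = q.
Proof.
move=> h; apply/eqP; rewrite -subr_eq0; apply/negPn/negP => H.
pose rs := [seq (k.+1)%:R : C | k <- iota 0 (size (p - q))].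
have hr : all (root (p - q)) rs.
  apply/allP => x /mapP [k _ ->]; rewrite /root hornerD hornerN h ?subrr //.
  by rewrite pnatr_eq0.
have hu : uniq rs.
  rewrite map_inj_uniq ?iota_uniq // => k1 k2 /eqP; rewrite eqr_nat eqSS => /eqP.
  by [].
by have := max_poly_roots H hr hu; rewrite size_map size_iota ltnn.
Qed.

Lemma det_Hmx_half (X : 'M[C]_5) t :
  \det ((2^-1 : C)%:M - Hmx X t) = 2^-1 ^+ 5 * P_poly X (expi (- t)) (expi t).
Proof.
have h2 : (2^-1 : C) != 0 by rewrite invr_eq0 pnatr_eq0.
have h22 : (2 * 2^-1 : C) = 1 by rewrite mulfV // pnatr_eq0.
by rewrite (det_Hmx _ _ h2) h22 !divr1.
Qed.

Lemma expiN0 : expi (- 0) = 1 :> C.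
Proof. by rewrite oppr0 expi0. Qed.

Lemma not_circ (a s : R) : - (55 / 100) < a < - (54 / 100) -> Phi a = 0 ->
  s ^+ 2 = 36 * (4 * a + 5) / (1025 * a * (5 * a - 4)) ->
  ~ Circularity (Calpha a s).
Proof.
move=> hab hp hs hcirc; have e := hcirc 0 (pi / 2).
have h2 : (2^-1 : C) != 0 by rewrite invr_eq0 pnatr_eq0.
have k1 := horner_char (Hmx (Calpha a s) 0) (2^-1).
have k2 := horner_char (Hmx (Calpha a s) (pi / 2)) (2^-1).
have d1 := det_Hmx_half (Calpha a s) 0.
have d2 := det_Hmx_half (Calpha a s) (pi / 2).
have E := etrans (esym d1) (etrans (esym k1) (etrans (congr1 (fun p => p.[2^-1]) e) (etrans k2 d2))).
move: E; rewrite expi_Npih expi_pih expiN0 expi0 => /(mulfI (expf_neq0 5 h2)) /eqP.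
by apply/negP; apply: P_ne.
Qed.

Lemma adjmx_Amx d n (B : 'M[C]_(d, n)) (X : 'M[C]_n) :
  adjmx (Amx B X) = block_mx 0 0 (adjmx B) (adjmx X).
Proof.
rewrite /adjmx /Amx map_block_mx tr_block_mx; congr block_mx;
  by apply/matrixP => i j; rewrite !mxE ?conjc0.
Qed.

Lemma Hmx_Amx d n (B : 'M[C]_(d, n)) (X : 'M[C]_n) t :
  Hmx (Amx B X) t = block_mx 0 ((2^-1 * expi (- t)) *: B)
                             ((2^-1 * expi t) *: adjmx B) (Hmx X t).
Proof.
Time rewrite /Hmx adjmx_Amx /Amx.
Time rewrite !scale_block_mx.
Time rewrite add_block_mx scale_block_mx.
Time rewrite !scaler0 !addr0 !add0r !scalerA scaler0.
Time by [].
Qed.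

Lemma det_schur d n (z : C) (U : 'M_(d, n)) V W :
  \det (block_mx (z%:M : 'M_d) U V W) * z ^+ n = z ^+ d * \det (W *m z%:M - V *m U).
Proof.
have := det_mulmx (block_mx (z%:M : 'M_d) U V W) (block_mx 1%:M (- U) 0 z%:M).
rewrite det_ublock det1 det_scalar mul1r mulmx_block => <-.
rewrite !mulmx1 !mulmx0 !addr0 mul_scalar_mx mul_mx_scalar scalerN addNr det_lblock det_scalar.
by rewrite mulmxN addrC.
Qed.

Lemma expi_neq0 (t : R) : expi t != 0 :> C.
Proof. by apply/negP => /eqP h; have := expiNK t; rewrite h mulr0 => /eqP; rewrite eq_sym oner_eq0. Qed.

Lemma det_A_eval d (B : 'M[C]_(d, 5)) (X : 'M[C]_5) t z : z != 0 ->
  adjmx B *m B = DC X ->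
  \det (z%:M - Hmx (Amx B X) t) * z ^+ 5 =
  z ^+ d * ((z ^+ 2) ^+ 5 * Q_poly X (expi (- t) / (2 * z)) (expi t / (2 * z))).
Proof.
move=> hz hB.
rewrite Hmx_Amx (scalar_mx_block d 5 z) opp_block_mx add_block_mx oppr0 addr0 !add0r.
rewrite det_schur; congr (_ * _).
rewrite /Q_poly -detZ; congr determinant.
rewrite mulNmx mulmxN opprK -scalemxAl -scalemxAr hB scalerA mul_mx_scalar /DC.
have hw' : expi t = (expi (- t))^-1.
  by apply: (mulfI (expi_neq0 (- t))); rewrite expiNK mulfV; last exact: expi_neq0.
have hw0 := expi_neq0 (- t).
set D := 1%:M - adjmx X *m X; clearbody D.
apply/matrixP => i j; rewrite !mxE hw'.
move: (expi (- t)) hw0 => w hw0.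
case: (i == j); rewrite /= ?mulr1n ?mulr0n; by field; rewrite hz hw0.
Qed.

Lemma circ_A d (B : 'M[C]_(d, 5)) (X : 'M[C]_5) :
  in_Cxy (Q_poly X) -> adjmx B *m B = DC X -> Circularity (Amx B X).
Proof.
move=> [q hq] hB t1 t2; apply: poly_eq_nz => z hz.
apply: (etrans (horner_char _ z)); apply: esym; apply: (etrans (horner_char _ z)); apply: esym.
apply: (mulIf (expf_neq0 5 hz)).
apply: (etrans (det_A_eval t1 hz hB)); apply: esym.
apply: (etrans (det_A_eval t2 hz hB)); apply: esym.
have ee t : expi (- t) / (2 * z) * (expi t / (2 * z)) = (2 * z)^-1 * (2 * z)^-1.
  by rewrite mulf_div expiNK mul1r invfM.
rewrite (hq (expi (- t1) / (2 * z))) (hq (expi (- t2) / (2 * z))) !ee.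
by [].
Qed.

End M.

Unset Implicit Arguments.

Theorem mainTheorem13 (R : realType) :
  (exists a : R, Phi a = 0 /\ - (55 / 100) < a < - (54 / 100)) /\
  (forall a s : R,
     Phi a = 0 -> - (55 / 100) < a < - (54 / 100) ->
     s ^+ 2 = 36 * (4 * a + 5) / (1025 * a * (5 * a - 4)) ->
     [/\ contraction (Calpha a s),
         in_Cxy (Q_poly (Calpha a s)),
         ~ in_Cxy (P_poly (Calpha a s)),
         (forall (d : nat) (B : 'M[R[i]]_(d, 5)),
            d = \rank (DC (Calpha a s)) -> row_free B ->
            adjmx B *m B = DC (Calpha a s) ->
            Circularity (Amx B (Calpha a s)))
       & ~ Circularity (Calpha a s)]).
Proof.
split; first exact: exists_root.
move=> a s hp hab hs.
have /andP [h1 h2] := hab.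
have ha : a != 0 by apply: ltr0_neq0; lra.
have h5 : 5 * a - 4 != 0 by apply: ltr0_neq0; lra.
have hQ : in_Cxy (Q_poly (Calpha a s)).
  by exists (qQ a%:C%C s%:C%C (cc a)%:C%C); apply: Q_in.
split.
- exact: contr.
- exact: hQ.
- move=> [q hq]; have := P_ne hab hp hs.
  by rewrite (hq 1 1) (hq (- 'i%C) 'i%C) sqr_iN (mul1r 1) eqxx.
- by move=> d B _ _ hB; apply: circ_A hQ hB.
- exact: not_circ.
Qed.
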